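(* Let $a_1\in\mathbb{R}$, $0<\varepsilon<1$, $T=1+\varepsilon$, and $(y,x_0)\in M^2=\mathbb{R}\times L^2(-1,0)$. Put $\widetilde{x}(t)=y+a_1\int_0^t x_0(\tau-1)\,d\tau$ for $t\in[0,1]$. Then $\mathcal{U}_T(y,x_0)$ is exactly the set of functions $u\in L^2(0,T)$ of the form (almost everywhere) $$u(t)=\begin{cases} u_0(t), & t\in[0,\varepsilon),\\ -a_1x_0(t-1), & t\in[\varepsilon,1),\\ -a_1\Big(\widetilde{x}(t-1)+\int_0^{t-1}u_0(\tau)\,d\tau\Big), & t\in[1,1+\varepsilon),\end{cases}$$ where $u_0$ ranges over all functions in $L^2(0,\varepsilon)$ satisfying $\int_0^\varepsilon u_0(\tau)\,d\tau=-\widetilde{x}(\varepsilon)$.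
   Context: Consider the scalar retarded control equation $\dot x(t)=a_1x(t-1)+u(t)$, $t\ge0$, with control $u\in L^2_{loc}(0,\infty)$ and initial data $x(0)=y$, $x(t)=x_0(t)$ for $t\in[-1,0)$, where $(y,x_0)\in M^2=\mathbb{R}\times L^2(-1,0)$. For every such initial state and control there is a unique continuous solution $x(t)=x(t;y,x_0,u)$ on $[0,\infty)$ (absolutely continuous, satisfying the equation a.e.). For $T>1$, the set of admissible controls $\mathcal{U}_T(y,x_0)$ is the set of $u\in L^2(0,T)$ such that $x(t;y,x_0,u)=0$ for all $t\in[T-1,T]$. *)

(* Defs.v *)
From HB Require Import structures.
From mathcomp Require Import all_boot all_order all_algebra.
From mathcomp Require Import all_classical all_reals all_analysis.
Set Implicit Arguments. Unset Strict Implicit. Unset Printing Implicit Defensive.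
Import Order.TTheory GRing.Theory Num.Theory.
Import numFieldNormedType.Exports.
Local Open Scope classical_set_scope.
Local Open Scope ring_scope.

Definition LInt {R : realType} (a b : R) (f : R -> R) : R :=
  \int[@lebesgue_measure R]_(s in `[a, b]) f s.

Definition L2on {R : realType} (a b : R) (f : R -> R) : Prop :=
  measurable_fun `[a, b] f /\
  (\int[@lebesgue_measure R]_(s in `[a, b]) ((f s) ^+ 2)%:E < +oo)%E.

(* x is the solution on [0,T] of  x'(t) = a1 x(t-1) + u(t),  x(0) = y,
   x(t) = x0(t) on [-1,0), written in integrated form (x is continuous and
   x(t) = y + int_0^t (a1 x(s-1) + u(s)) ds), the delayed value x(s-1)
   being x0(s-1) for s < 1. *)
Definition is_solution {R : realType} (a1 y : R) (x0 u : R -> R) (T : R)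
    (x : R -> R) : Prop :=
  {within `[0, T], continuous x} /\
  forall t, 0 <= t <= T ->
    x t = y + LInt 0 t (fun s => a1 * (if s < 1 then x0 (s - 1) else x (s - 1)) + u s).

Definition admissible {R : realType} (a1 y : R) (x0 : R -> R) (T : R)
    (u : R -> R) : Prop :=
  L2on 0 T u /\
  exists x, is_solution a1 y x0 u T x /\ (forall t, T - 1 <= t <= T -> x t = 0).

Definition xtilde {R : realType} (a1 y : R) (x0 : R -> R) (t : R) : R :=
  y + a1 * LInt 0 t (fun tau => x0 (tau - 1)).

Definition ctrl {R : realType} (a1 y eps : R) (x0 u0 : R -> R) (t : R) : R :=
  if t < eps then u0 t
  else if t < 1 then - a1 * x0 (t - 1)
  else - a1 * (xtilde a1 y x0 (t - 1) + LInt 0 (t - 1) u0).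

(* Main.v *)
Require Import Defs.
Set Warnings "-notation-overridden,-ambiguous-paths,-notation-incompatible-prefix,-overwriting-delimiting-key".
From HB Require Import structures.
From mathcomp Require Import all_boot all_order all_algebra.
From mathcomp Require Import all_classical all_reals all_analysis.
From mathcomp Require Import measurable_realfun.
From mathcomp Require Import ring lra.
Import Order.TTheory GRing.Theory Num.Theory.
Import numFieldNormedType.Exports.
Local Open Scope classical_set_scope.
Local Open Scope ring_scope.
Section Aux.
Context {R : realType}.
Local Notation mu := (@lebesgue_measure R).

Lemma itv_int1 (a b : R) : mu.-integrable `[a,b] (EFin \o cst (1:R)).
Proof.
apply/integrableP; split; first exact/measurable_EFinP/measurable_cst.
rewrite (eq_integral (fun _ => 1%E)); last by move=> ? _; rewrite /= normr1.
rewrite integral_cst//= mul1e lebesgue_measure_itv/=.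
by case: ifP => _; rewrite ?ltry.
Qed.

Lemma L2_int a b f : L2on a b f -> mu.-integrable `[a,b] (EFin \o f).
Proof.
move=> [mf If].
have i2 : mu.-integrable `[a,b] (EFin \o (fun s => f s ^+ 2)).
  apply/integrableP; split; first by apply/measurable_EFinP; exact: measurable_funX.
  apply: le_lt_trans If; rewrite le_eqVlt; apply/orP; left; apply/eqP.
  by apply: eq_integral => s _; rewrite /= ger0_norm// sqr_ge0.
have i3 : mu.-integrable `[a,b] (EFin \o (fun s => f s ^+ 2 + 1)).
  have H := integrableD _ i2 (itv_int1 a b).
  have {}H := H (measurable_itv _).
  by move: H; apply: eq_integrable => // s _; rewrite /= -EFinD.
move: i3; apply: le_integrable => //.
  exact/measurable_EFinP.
move=> s _ /=; rewrite lee_fin (ger0_norm (_ : 0 <= f s ^+ 2 + 1)); last first.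
  by rewrite addr_ge0// sqr_ge0.
rewrite -(real_normK (num_real (f s))); have := normr_ge0 (f s); set t := `|f s|; nra.
Qed.

End Aux.
Section Shift.
Context {R : realType}.
Local Notation mu := (@lebesgue_measure R).

Lemma shift_measure (A : set R) : measurable A ->
  pushforward mu ((fun s => s - 1) : R -> measurableTypeR R) A = mu A.
Proof.
move=> mA; apply/esym/lebesgue_measure_unique => //=; last first.
  move=> _ _ [[a b]] _ <-.
  rewrite /pushforward /=.
  have -> : (fun s : R => s - 1) @^-1` `]a, b]%classic = `]a + 1, b + 1]%classic.
    by apply/seteqP; split => x /=; rewrite !in_itv/= ltrBrDr lerBlDr.
  rewrite !lebesgue_measure_itv/= !lte_fin ltrD2r.
  by rewrite -!EFinD; congr (if _ then _ else _); congr EFin; ring.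
by apply: measurable_funD => //.
Qed.
End Shift.
Section Shift2.
Context {R : realType}.
Local Notation mu := (@lebesgue_measure R).

Lemma shift_int (f : R -> R) : mu.-integrable `[-1,0] (EFin \o f) ->
  mu.-integrable `[0,1] (EFin \o (fun s => f (s - 1))).
Proof.
move=> /integrableP [mf fi]; apply/integrableP; split.
  have : measurable_fun (`[0, 1]%classic : set R) (fun s : R => (f (s - 1))%:E).
    apply: (measurable_comp _ _ mf) => //.
      move=> _ [x /= + <-]; rewrite !in_itv/= => /andP[h1 h2].
      apply/andP; split; lra.
    by apply: measurable_funD => //.
  by [].
have mphi : measurable_fun [set: R] ((fun s => s - 1) : R -> measurableTypeR R).
  by apply: measurable_funD => //.
apply: le_lt_trans fi; rewrite le_eqVlt; apply/orP; left; apply/eqP.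
  rewrite [RHS](eq_measure_integral (pushforward mu ((fun s => s - 1) : R -> measurableTypeR R))); last first.
    by move=> A mA _; symmetry; apply: shift_measure.
  rewrite ge0_integral_pushforward //; last first.
    by apply: measurableT_comp => //.
  have -> : ((fun s => s - 1) : R -> measurableTypeR R) @^-1` `[-1, 0]%classic = `[0, 1]%classic.
    apply/seteqP; split => x /=; rewrite !in_itv/= => /andP[h1 h2]; apply/andP; split; lra.
  by [].
Qed.
End Shift2.
Section Gen.
Context {R : realType}.
Local Notation mu := (@lebesgue_measure R).

Lemma LInt_split (a c b : R) f : a <= c -> c <= b ->
  mu.-integrable `[a,b] (EFin \o f) -> LInt a b f = LInt a c f + LInt c b f.
Proof.
move=> ac cb intf.
have := @Rintegral_itvB R f (BLeft a) (BRight b) c intf.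
rewrite !bnd_simp => /(_ ac cb) H.
rewrite /LInt -(@Rintegral_itv_obnd_cbnd R c (BRight b)); last first.
  by apply: integrableS intf => //; apply: subset_itvr; rewrite bnd_simp.
by rewrite -H addrC subrK.
Qed.

Lemma integrableU2 (A B : set R) (f : R -> \bar R) : measurable A -> measurable B ->
  [disjoint A & B] ->
  mu.-integrable A f -> mu.-integrable B f -> mu.-integrable (A `|` B) f.
Proof.
move=> mA mB AB /integrableP[mfA iA] /integrableP[mfB iB].
have mf : measurable_fun (A `|` B) f by apply/measurable_funU.
apply/integrableP; split => //.
rewrite ge0_integral_setU //; first exact: lte_add_pinfty.
exact: measurableT_comp.
Qed.

Lemma ae_neq (c : R) : {ae mu, forall x, x != c}.
Proof.
exists [set c]; split => //; first exact: lebesgue_measure_set1.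
by move=> x /= /negP; rewrite negbK => /eqP.
Qed.

Lemma LInt_ae (a b : R) f g : measurable_fun `[a,b] f -> measurable_fun `[a,b] g ->
  {ae mu, forall x, a <= x <= b -> f x = g x} -> LInt a b f = LInt a b g.
Proof.
move=> mf mg H; rewrite /LInt /Rintegral; congr fine.
apply: ae_eq_integral => //.
- exact/measurable_EFinP.
- exact/measurable_EFinP.
move: H; apply: filterS; first exact: (ae_filter_ringOfSetsType mu).
move=> x h; rewrite /= in_itv/= => hx; by rewrite h.
Qed.

End Gen.
Section FTCz.
Context {R : realType}.
Local Notation mu := (@lebesgue_measure R).

Lemma ae_zero_of_int (a b : R) h : mu.-integrable `[a,b] (EFin \o h) ->
  (forall t, a <= t <= b -> LInt a t h = 0) -> {ae mu, forall x, a < x < b -> h x = 0}.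
Proof.
move=> inth h0.
pose f := h \_ `[a,b].
have intT : mu.-integrable setT (EFin \o f).
  have := inth; rewrite integrable_mkcond //.
  by rewrite restrict_EFin.
have intf : forall y, mu.-integrable [set` Interval (BRight a) (BRight y)] (EFin \o f).
  by move=> y; apply: integrableS intT.
have locf : locally_integrable setT f by exact: integrable_locally.
have := FTC1 intf locf.
apply: filterS; first exact: (ae_filter_ringOfSetsType mu).
move=> x Hx /andP[ax xb].
have [_ d] := Hx (ax : (BRight a < BRight x)%O).
have xab : x \in `]a, b[ by rewrite in_itv/= ax xb.
rewrite /f patchE mem_set in d; last by rewrite /= in_itv/= (ltW ax) (ltW xb).
rewrite -d derive1E.
rewrite (@near_eq_derive _ _ _ _ (cst 0)) ?derive_cst//.
near=> y.
have yab : y \in `]a, b[ by near: y; exact: near_in_itvoo.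
move: yab; rewrite in_itv/= => /andP[ay yb].
have sub : `]a, y]%classic `<=` `[a, b]%classic.
  by apply: subset_itv; rewrite bnd_simp// ltW.
rewrite (@eq_Rintegral _ _ _ _ _ h); last first.
  by move=> z /[!inE] zay; rewrite patchE mem_set//; exact: sub.
rewrite Rintegral_itv_obnd_cbnd; last by apply: integrableS inth => //.
by rewrite -/(LInt a y h) h0// (ltW ay) (ltW yb).
Unshelve. all: by end_near.
Qed.
End FTCz.
Section Hint.
Context {R : realType}.
Local Notation mu := (@lebesgue_measure R).

Lemma LInt_abs_le (b t : R) K : 0 <= t <= b -> mu.-integrable `[0, b] (EFin \o K) ->
  `|LInt 0 t K| <= LInt 0 b (fun s => `|K s|).
Proof.
move=> /andP[t0 tb] iK.
have iKa : mu.-integrable `[0, b] (EFin \o (fun s => `|K s|)).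
  have := integrable_abse iK.
  by apply: eq_integrable => // s _.
apply: (le_trans (le_normr_Rintegral _ _)) => //.
  by apply: integrableS iK => //; apply: subset_itvl; rewrite bnd_simp.
rewrite [leRHS](@LInt_split _ 0 t b _ t0 tb iKa) lerDl.
by apply: Rintegral_ge0 => s _.
Qed.

Lemma Pmeas (e : R) K : 0 <= e -> mu.-integrable `[0, e] (EFin \o K) ->
  measurable_fun `[0, e] (fun t => LInt 0 t K).
Proof.
move=> e0 iK.
apply: subspace_continuous_measurable_fun => //.
exact: parameterized_integral_continuous.
Qed.

End Hint.
Section Hint2.
Context {R : realType}.
Local Notation mu := (@lebesgue_measure R).

Lemma h_int (a1 y eps : R) (x0 u x K : R -> R) : 0 < eps -> eps < 1 ->
  mu.-integrable `[-1,0] (EFin \o x0) -> mu.-integrable `[0, 1 + eps] (EFin \o u) ->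
  mu.-integrable `[0, eps] (EFin \o K) ->
  (forall t, 0 <= t <= eps -> x t = y + LInt 0 t K) ->
  mu.-integrable `[0, 1 + eps]
    (EFin \o (fun s => a1 * (if s < 1 then x0 (s - 1) else x (s - 1)) + u s)).
Proof.
move=> e0 e1 ix0 iu iK hx.
pose p := fun s => if s < 1 then x0 (s - 1) else x (s - 1).
suff ip : mu.-integrable `[0, 1 + eps] (EFin \o p).
  have H := integrableD _ (integrableZl _ a1 ip) iu.
  have {}H := H (measurable_itv _).
  have {}H := H (measurable_itv _).
  by move: H; apply: eq_integrable => // s _.
have -> : (`[0, 1 + eps]%classic : set R) = `[0, 1[%classic `|` `[1, 1 + eps]%classic.
  apply/seteqP; split => s /=; rewrite !in_itv/=.
    move=> /andP[h1 h2]; have [s1|s1] := ltP s 1; [left|right]; apply/andP; split => //; lra.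
  by move=> [] /andP[h1 h2]; apply/andP; split; lra.
apply: integrableU2 => //.
- apply/eqP/seteqP; split => s //=; rewrite !in_itv/= => -[] /andP[h1 h2] /andP[h3 h4]; lra.
- have H : mu.-integrable `[0, 1[ (EFin \o (fun s => x0 (s - 1))).
    apply: integrableS (@shift_int _ x0 ix0) => //.
    by apply: subset_itvl; rewrite bnd_simp.
  move: H; apply: eq_integrable => // s; rewrite inE/= in_itv/= => /andP[_ s1].
  by rewrite /p /= s1.
- pose B := LInt 0 eps (fun s => `|K s|).
  have ig : mu.-integrable `[1, 1 + eps] (EFin \o (fun s => y + LInt 0 (s - 1) K)).
    apply: measurable_bounded_integrable => //.
    + exact/compact_finite_measure/segment_compact.
    + apply: measurable_funD => //.
      apply: (measurable_comp (measurable_itv `[0, eps]) _ (@Pmeas _ eps K (ltW e0) iK)).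
        move=> _ [s /= + <-]; rewrite !in_itv/= => /andP[h1 h2].
        apply/andP; split; lra.
      by apply: measurable_funD => //.
    + exists (`|y| + B); split; first exact: num_real.
      move=> M BM s; rewrite /= in_itv/= => /andP[h1 h2].
      apply: ltW; apply: le_lt_trans BM.
      apply: (le_trans (ler_normD _ _)); rewrite lerD2l.
      apply: LInt_abs_le => //; apply/andP; split; lra.
  move: ig; apply: eq_integrable => // s; rewrite inE/= in_itv/= => /andP[h1 h2].
  rewrite /p /= ltNge h1 /= hx//; apply/andP; split; lra.
Qed.

End Hint2.
Lemma ae3 {R : realType} (P Q S W : R -> Prop) :
  {ae @lebesgue_measure R, forall x, P x} ->
  {ae @lebesgue_measure R, forall x, Q x} ->
  {ae @lebesgue_measure R, forall x, S x} ->
  (forall x, P x -> Q x -> S x -> W x) -> {ae @lebesgue_measure R, forall x, W x}.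
Proof.
move=> hP hQ hS H.
have F := ae_filter_ringOfSetsType (@lebesgue_measure R).
have := @filterI _ _ F _ _ hP (@filterI _ _ F _ _ hQ hS).
apply: filterS => x [px [qx sx]]; exact: H.
Qed.

Theorem mainTheorem1 (R : realType) (a1 eps y : R) (x0 : R -> R)
  (heps0 : 0 < eps) (heps1 : eps < 1) (hx0 : L2on (-1) 0 x0) (u : R -> R) :
  admissible a1 y x0 (1 + eps) u <->
  (L2on 0 (1 + eps) u /\
   exists u0 : R -> R,
     [/\ L2on 0 eps u0,
         LInt 0 eps u0 = - xtilde a1 y x0 eps &
         {ae @lebesgue_measure R, forall t,
            t \in `[0, 1 + eps] -> u t = ctrl a1 y eps x0 u0 t}]).
Proof.
pose mu := @lebesgue_measure R.
have ix0 := @L2_int R _ _ _ hx0.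
have ish : mu.-integrable `[0, 1] (EFin \o (fun s => x0 (s - 1))) := @shift_int R x0 ix0.
pose G := fun s => a1 * x0 (s - 1) + u s.
have base : L2on 0 (1 + eps) u -> forall r, 0 <= r <= 1 ->
   mu.-integrable `[0, r] (EFin \o G) /\
   LInt 0 r G = a1 * LInt 0 r (fun s => x0 (s - 1)) + LInt 0 r u.
  move=> Lu r /andP[r0 r1].
  have iu := @L2_int R _ _ _ Lu.
  have iur : mu.-integrable `[0, r] (EFin \o u).
    by apply: integrableS iu => //; apply: subset_itvl; rewrite bnd_simp; lra.
  have ixr : mu.-integrable `[0, r] (EFin \o (fun s => x0 (s - 1))).
    by apply: integrableS ish => //; apply: subset_itvl; rewrite bnd_simp.
  have ixr' : mu.-integrable `[0, r] (EFin \o (fun s => a1 * x0 (s - 1))).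
    have H := integrableZl _ a1 ixr; have {}H := H (measurable_itv _).
    by move: H; apply: eq_integrable => // s _.
  split.
    have H := integrableD _ ixr' iur; have {}H := H (measurable_itv _).
    by move: H; apply: eq_integrable => // s _.
  by rewrite /LInt /G RintegralD // RintegralZl.
split.
- move=> [Lu [x [[cx hxeq] hz]]].
  have iu := @L2_int R _ _ _ Lu.
  pose h := fun s => a1 * (if s < 1 then x0 (s - 1) else x (s - 1)) + u s.
  have xG : forall t, 0 <= t <= eps -> x t = y + LInt 0 t G.
    move=> t /andP[t0 te]; rewrite hxeq; last by apply/andP; split; lra.
    congr (_ + _); apply: eq_Rintegral => s; rewrite inE/= in_itv/= => /andP[_ st].
    by rewrite /G ifT//; lra.
  have iG : mu.-integrable `[0, eps] (EFin \o G).
    by case: (base Lu eps) => //; apply/andP; split; lra.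
  have ih : mu.-integrable `[0, 1 + eps] (EFin \o h).
    exact: (@h_int R a1 y eps x0 u x G).
  split => //; exists u; split.
  + case: Lu => mu2 Iu2; split.
      by apply: measurable_funS mu2 => //; apply: subset_itvl; rewrite bnd_simp; lra.
    apply: le_lt_trans Iu2; apply: ge0_subset_integral => //.
    * apply/measurable_EFinP; exact: measurable_funX.
    * by move=> s _; rewrite lee_fin sqr_ge0.
    * by apply: subset_itvl; rewrite bnd_simp; lra.
  + have := hz eps; rewrite xG; last by apply/andP; split; lra.
    case: (base Lu eps); first by apply/andP; split; lra.
    move=> _ ->; rewrite /xtilde => H.
    have hh : 1 + eps - 1 <= eps <= 1 + eps by apply/andP; split; lra.
    have {}H := H hh.
    move: H; set A := LInt 0 eps _; set B := LInt 0 eps u => H.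
    lra.
  + have hz0 : {ae @lebesgue_measure R, forall s, eps < s < 1 + eps -> h s = 0}.
      apply: ae_zero_of_int.
        by apply: integrableS ih => //; apply: subset_itvr; rewrite bnd_simp; lra.
      move=> t /andP[et tT].
      have iht : mu.-integrable `[0, t] (EFin \o h).
        by apply: integrableS ih => //; apply: subset_itvl; rewrite bnd_simp.
      have := @LInt_split R 0 eps t h (ltW heps0) et iht.
      have h1 : x t = y + LInt 0 t h by apply: hxeq; apply/andP; split; lra.
      have h2 : x eps = y + LInt 0 eps h by apply: hxeq; apply/andP; split; lra.
      have h3 : x t = 0 by apply: hz; apply/andP; split; lra.
      have h4 : x eps = 0 by apply: hz; apply/andP; split; lra.
      lra.
    apply: ae3; [exact: hz0|exact: (ae_neq eps)|exact: (ae_neq (1 + eps))|] => t H0 ne1 ne2.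
    rewrite in_itv/= => /andP[t0 tT]; rewrite /ctrl.
    case: ltP => te //.
    have et : eps < t by rewrite lt_neqAle eq_sym ne1 te.
    have tT' : t < 1 + eps by rewrite lt_neqAle ne2 tT.
    have := H0 _; rewrite et tT' => /(_ isT); rewrite /h.
    case: ltP => t1 Hh; first lra.
    rewrite xG in Hh; last by apply/andP; split; lra.
    case: (base Lu (t - 1)); first by apply/andP; split; lra.
    move=> _ E; rewrite E in Hh; rewrite /xtilde.
    move: Hh; set A := LInt 0 (t - 1) (fun s => x0 (s - 1)).
    set B := LInt 0 (t - 1) u => Hh.
    have -> : u t = - (a1 * (y + (a1 * A + B))) by lra.
    ring.
- move=> [Lu [u0 [Lu0 hint hae]]].
  split => //.
  have iu := @L2_int R _ _ _ Lu.
  have iu0 := @L2_int R _ _ _ Lu0.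
  have Euu0 : forall r, 0 <= r <= eps -> LInt 0 r u = LInt 0 r u0.
    move=> r /andP[r0 re]; apply: LInt_ae.
    - apply/measurable_EFinP; apply: (measurable_int mu).
      by apply: integrableS iu => //; apply: subset_itvl; rewrite bnd_simp; lra.
    - apply/measurable_EFinP; apply: (measurable_int mu).
      by apply: integrableS iu0 => //; apply: subset_itvl; rewrite bnd_simp; lra.
    apply: ae3; [exact: hae|exact: (ae_neq eps)|exact: (ae_neq eps)|].
    move=> s H ne _ /andP[s0 sr].
    rewrite H; last by rewrite in_itv/=; apply/andP; split; lra.
    by rewrite /ctrl ifT// lt_neqAle ne/=; lra.
  have iG : mu.-integrable `[0, eps] (EFin \o G).
    by case: (base Lu eps) => //; apply/andP; split; lra.
  pose Gr := G \_ `[0, eps].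
  have iGr : mu.-integrable `[0, 1 + eps] (EFin \o Gr).
    have := iG; rewrite integrable_mkcond // restrict_EFin => H.
    by apply: integrableS H.
  have GrG : forall r, 0 <= r <= eps -> LInt 0 r Gr = LInt 0 r G.
    move=> r /andP[r0 re]; apply: eq_Rintegral => s; rewrite inE/= in_itv/=.
    move=> /andP[s0 sr]; rewrite /Gr patchE mem_set//= in_itv/=.
    by apply/andP; split; lra.
  pose x := fun t => y + LInt 0 t Gr.
  pose k := fun s => a1 * (if s < 1 then x0 (s - 1) else x (s - 1)) + u s.
  have ik : mu.-integrable `[0, 1 + eps] (EFin \o k).
    apply: (@h_int R a1 y eps x0 u x Gr) => //.
    by apply: integrableS iGr => //; apply: subset_itvl; rewrite bnd_simp; lra.
  exists x; split; [split|].
  + have le0 : 0 <= 1 + eps by lra.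
    have hc := @parameterized_integral_continuous R 0 (1 + eps) Gr le0 iGr.
    move=> t; apply: cvgD; first exact: cvg_cst.
    exact: hc.
  + move=> t /andP[t0 tT]; rewrite {1}/x; congr (y + _).
    have sub : `[0, t]%classic `<=` `[0, 1 + eps]%classic.
      by apply: subset_itvl; rewrite bnd_simp.
    apply: LInt_ae.
    - apply/measurable_EFinP; apply: (measurable_int mu).
      by apply: integrableS iGr.
    - apply/measurable_EFinP; apply: (measurable_int mu).
      by apply: integrableS ik.
    apply: ae3; [exact: hae|exact: hae|exact: hae|].
    move=> s H _ _ /andP[s0 st].
    have sT : s \in `[0, 1 + eps] by rewrite in_itv/= s0 (le_trans st tT).
    have {}H := H sT.
    rewrite /Gr /k patchE; case: ifPn => sD.
      move: sD; rewrite inE/= in_itv/= => /andP[_ se].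
      by rewrite /G ifT//; lra.
    move: sD; rewrite notin_setE /= in_itv/= s0 /= => /negP; rewrite -ltNge => es.
    have -> : (point : R) = 0 by [].
    move: H; rewrite /ctrl ltNge (ltW es)/=.
    case: ltP => s1 H.
      by rewrite H; ring.
    have s1e : 0 <= s - 1 <= eps by apply/andP; split; lra.
    rewrite H /x GrG//.
    case: (base Lu (s - 1)); first by apply/andP; split; lra.
    move=> _ ->; rewrite Euu0// /xtilde; ring.
  + move=> t /andP[t1 tT].
    have et : eps <= t by lra.
    have iGrt : mu.-integrable `[0, t] (EFin \o Gr).
      by apply: integrableS iGr => //; apply: subset_itvl; rewrite bnd_simp.
    have := @Rintegral_itvB R Gr (BLeft 0) (BRight t) eps iGrt.
    rewrite !bnd_simp => /(_ (ltW heps0) et).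
    have -> : \int[mu]_(s in `]eps, t]) Gr s = \int[mu]_(s in `]eps, t]) (0 : R).
      apply: eq_Rintegral => s; rewrite inE/= in_itv/= => /andP[es _].
      rewrite /Gr patchE; case: ifPn => // sin; exfalso; move: sin.
      by rewrite inE /= in_itv /= => /andP[_]; rewrite leNgt es.
    rewrite Rintegral_cst// mul0r => H.
    rewrite /x -/(LInt 0 t Gr).
    have -> : LInt 0 t Gr = LInt 0 eps Gr.
      by apply/eqP; rewrite -subr_eq0; apply/eqP; exact: H.
    rewrite GrG; last by apply/andP; split; lra.
    case: (base Lu eps); first by apply/andP; split; lra.
    move=> _ ->; rewrite Euu0; last by apply/andP; split; lra.
    rewrite hint /xtilde; ring.
Qed.
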